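(* Let $m=2^i$ with $i\ge 1$. The subspaces of $\mathbb{R}^m$ defined by the generator matrices in $\mathcal{C}_i$ (constructed below) form a set of $(m-1)(m+2)=2^{2i}+2^i-2$ distinct $\tfrac{m}{2}$-dimensional subspaces of $\mathbb{R}^m$, and the distance between any two distinct subspaces of this set is either $\sqrt{m/4}$ or $\sqrt{m/2}$.
   Context: A subspace $P$ of $\mathbb{R}^m$ of dimension $n$ is specified by a generator matrix, an $n\times m$ matrix whose rows span $P$; the same symbol is used for the subspace and its generator matrix, and $P^\perp$ denotes (a generator matrix of) the orthogonal complement of $P$ in the ambient space. $I$ denotes an identity matrix of the appropriate size, $0$ a zero matrix, and $+$, $-$ denote $+1$, $-1$. Distance: for two $n$-dimensional subspaces $P,Q$ of $\mathbb{R}^m$, the principal angles $\theta_1,\dots,\theta_n\in[0,\pi/2]$ are defined by $\cos\theta_k=\max_{u\in P}\max_{v\in Q} u\cdot v = u_k\cdot v_k$ for $k=1,\dots,n$, subject to $u\cdot u=v\cdot v=1$ and $u\cdot u_j=0$, $v\cdot v_j=0$ for $1\le j\le k-1$. The distance is $d(P,Q)=\sqrt{\sin^2\theta_1+\cdots+\sin^2\theta_n}$. Sets $\mathcal{Q}_i$ of $2^{i-1}\times 2^{i-1}$ matrices: $\mathcal{Q}_1=\{(+),(-)\}$, and for $i\ge 2$, $\mathcal{Q}_i=\left\{\begin{pmatrix}+&0\\0&+\end{pmatrix}\otimes Q,\ \begin{pmatrix}+&0\\0&-\end{pmatrix}\otimes Q,\ \begin{pmatrix}0&+\\+&0\end{pmatrix}\otimes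 Q,\ \begin{pmatrix}0&+\\-&0\end{pmatrix}\otimes Q \;:\; Q\in\mathcal{Q}_{i-1}\right\}$, where $\otimes$ is the Kronecker product. Sets $\mathcal{C}_i$ of $2^{i-1}\times 2^i$ generator matrices: $\mathcal{C}_1=\{(+\ 0),(0\ +),(+\ +),(+\ -)\}$ (four lines in $\mathbb{R}^2$), and for $i\ge2$, $\mathcal{C}_i=\left\{(I\ 0),\ (0\ I),\ \begin{pmatrix}P&0\\0&P\end{pmatrix},\ \begin{pmatrix}P&0\\0&P^\perp\end{pmatrix},\ (I\ Q)\;:\; P\in\mathcal{C}_{i-1},\ Q\in\mathcal{Q}_i\right\}$, where $I$ is the $2^{i-1}\times 2^{i-1}$ identity. Thus $(I\ 0)$ spans the first $2^{i-1}$ coordinate vectors of $\mathbb{R}^{2^i}$, $(0\ I)$ the last $2^{i-1}$, $\begin{pmatrix}P&0\\0&P\end{pmatrix}$ is $P\oplus P$ and $\begin{pmatrix}P&0\\0&P^\perp\end{pmatrix}$ is $P\oplus P^\perp$ (with $P,P^\perp\subset\mathbb{R}^{2^{i-1}}$), and $(I\ Q)$ is the row space of the $2^{i-1}\times 2^i$ matrix $[I\,|\,Q]$. *)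

(* Defs.v *)
From HB Require Import structures.
From mathcomp Require Import all_boot all_order all_algebra.
From mathcomp Require Import reals.
Set Implicit Arguments. Unset Strict Implicit. Unset Printing Implicit Defensive.
Import Order.TTheory GRing.Theory Num.Theory.
Local Open Scope ring_scope.

Lemma dbl_pow2 (k : nat) : (2 ^ k + 2 ^ k = 2 ^ k.+1)%N.
Proof. by rewrite expnS mul2n addnn. Qed.

Section Constr.
Variable R : realType.

Definition cast2 (k : nat) (A : 'M[R]_(2 ^ k + 2 ^ k)) : 'M[R]_(2 ^ k.+1) :=
  castmx (dbl_pow2 k, dbl_pow2 k) A.

Definition kron22 (n : nat) (a b c d : R) (Q : 'M[R]_n) : 'M[R]_(n + n) :=
  block_mx (a *: Q) (b *: Q) (c *: Q) (d *: Q).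

(* Qs k = the set Q_{k+1} of 2^k x 2^k matrices (listed in construction order) *)
Fixpoint Qs (k : nat) : seq 'M[R]_(2 ^ k) :=
  match k return seq 'M[R]_(2 ^ k) with
  | 0 => [:: 1%:M; (-1)%:M]
  | k'.+1 =>
      flatten [seq [:: cast2 (kron22 1 0 0 1 Q); cast2 (kron22 1 0 0 (-1) Q);
                       cast2 (kron22 0 1 1 0 Q); cast2 (kron22 0 1 (-1) 0 Q)]
              | Q <- Qs k']
  end.

Definition perpmx (n : nat) (P : 'M[R]_n) : 'M[R]_n := kermx P^T.

Definition line2 (a b : R) : 'M[R]_2 :=
  \matrix_(i < 2, j < 2) if i == 0 then (if j == 0 then a else b) else 0.

(* Cs k = the set C_{k+1}.  Each subspace of R^(2^(k+1)) is represented by a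
   square 2^(k+1) x 2^(k+1) matrix whose ROW SPACE is the subspace (the rows
   of the paper's 2^k x 2^(k+1) generator matrix, padded with zero rows). *)
Fixpoint Cs (k : nat) : seq 'M[R]_(2 ^ k.+1) :=
  match k return seq 'M[R]_(2 ^ k.+1) with
  | 0 => [:: line2 1 0; line2 0 1; line2 1 1; line2 1 (-1)]
  | k'.+1 =>
      [:: cast2 (block_mx 1%:M 0 0 0);
          cast2 (block_mx 0 1%:M 0 0)]
      ++ [seq cast2 (block_mx P 0 0 P) | P <- Cs k']
      ++ [seq cast2 (block_mx P 0 0 (perpmx P)) | P <- Cs k']
      ++ [seq cast2 (block_mx 1%:M Q 0 0) | Q <- Qs k'.+1]
  end.

Definition dotv (m : nat) (u v : 'rV[R]_m) : R := (u *m v^T) 0 0.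

Definition principal_seq (p q m n : nat) (A : 'M[R]_(p, m)) (B : 'M[R]_(q, m))
    (us vs : 'I_n -> 'rV[R]_m) : Prop :=
  forall k : 'I_n,
    [/\ (us k <= A)%MS /\ (vs k <= B)%MS,
        dotv (us k) (us k) = 1, dotv (vs k) (vs k) = 1,
        (forall j : 'I_n, (j < k)%N ->
            dotv (us k) (us j) = 0 /\ dotv (vs k) (vs j) = 0) &
        (forall u v : 'rV[R]_m, (u <= A)%MS -> (v <= B)%MS ->
            dotv u u = 1 -> dotv v v = 1 ->
            (forall j : 'I_n, (j < k)%N -> dotv u (us j) = 0 /\ dotv v (vs j) = 0) ->
            dotv u v <= dotv (us k) (vs k))].

(* d(P,Q) = sqrt(sum_k sin^2 theta_k), with cos theta_k = us k . vs k *)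
Definition dist_of (m n : nat) (us vs : 'I_n -> 'rV[R]_m) : R :=
  Num.sqrt (\sum_(k < n) (1 - (dotv (us k) (vs k)) ^+ 2)).

End Constr.

(* Main.v *)
Require Import Defs.
From HB Require Import structures.
From mathcomp Require Import all_boot all_order all_algebra.
From mathcomp Require Import reals.
From mathcomp Require Import ring lra zify.
From Stdlib Require Import Lia.
Import Order.TTheory GRing.Theory Num.Theory.
Local Open Scope ring_scope.
Set Implicit Arguments. Unset Strict Implicit. Unset Printing Implicit Defensive.


Section Basics.
Variable R : realType.

Lemma dotvE m (u v : 'rV[R]_m) : dotv u v = \sum_i u 0 i * v 0 i.
Proof. by rewrite /dotv mxE; apply: eq_bigr => i _; rewrite mxE. Qed.

Lemma dotvC m (u v : 'rV[R]_m) : dotv u v = dotv v u.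
Proof. by rewrite !dotvE; apply: eq_bigr => i _; rewrite mulrC. Qed.

Lemma dotvDr m (u v w : 'rV[R]_m) : dotv u (v + w) = dotv u v + dotv u w.
Proof. by rewrite !dotvE -big_split; apply: eq_bigr => i _; rewrite mxE mulrDr. Qed.

Lemma dotvZr m a (u v : 'rV[R]_m) : dotv u (a *: v) = a * dotv u v.
Proof. by rewrite !dotvE mulr_sumr; apply: eq_bigr => i _; rewrite mxE mulrCA. Qed.

Lemma dotvDl m (u v w : 'rV[R]_m) : dotv (v + w) u = dotv v u + dotv w u.
Proof. by rewrite dotvC dotvDr !(dotvC u). Qed.

Lemma dotvZl m a (u v : 'rV[R]_m) : dotv (a *: v) u = a * dotv v u.
Proof. by rewrite dotvC dotvZr dotvC. Qed.

Lemma dotv_ge0 m (u : 'rV[R]_m) : 0 <= dotv u u.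
Proof. by rewrite dotvE sumr_ge0 // => i _; rewrite -expr2 sqr_ge0. Qed.

Lemma dotv_eq0 m (u : 'rV[R]_m) : (dotv u u == 0) = (u == 0).
Proof.
apply/idP/idP; last by move/eqP->; rewrite dotvE big1 // => i _; rewrite mxE mul0r.
rewrite dotvE psumr_eq0 => [/allP H|i _]; last by rewrite -expr2 sqr_ge0.
apply/eqP/rowP => i; rewrite mxE; apply/eqP.
by have := H i (mem_index_enum _); rewrite -expr2 sqrf_eq0.
Qed.

Lemma mulmxT_entry m n p (U : 'M[R]_(m, n)) (V : 'M[R]_(p, n)) i j :
  (U *m V^T) i j = dotv (row i U) (row j V).
Proof. by rewrite dotvE mxE; apply: eq_bigr => l _; rewrite !mxE. Qed.

Lemma exists_unit p m (S : 'M[R]_(p, m)) : (0 < \rank S)%N ->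
  exists u : 'rV[R]_m, (u <= S)%MS /\ dotv u u = 1.
Proof.
move=> rS.
have nz : nz_row S != 0 by rewrite nz_row_eq0 -mxrank_eq0 -lt0n.
set w := nz_row S.
have wpos : 0 < dotv w w by rewrite lt_def dotv_eq0 nz dotv_ge0.
exists ((Num.sqrt (dotv w w))^-1 *: w); split.
  by rewrite scalemx_sub // nz_row_sub.
rewrite dotvZl dotvZr mulrA -expr2 exprVn sqr_sqrtr ?ltW // mulVf //.
by rewrite gt_eqF.
Qed.


Lemma orth_rank r m (U : 'M[R]_(r, m)) : U *m U^T = 1%:M -> \rank U = r.
Proof.
move=> UU; apply/eqP; rewrite eqn_leq rank_leq_row /=.
by rewrite -{1}(mxrank1 R r) -UU mxrankM_maxl.
Qed.

Lemma eqmx_of_rank p q m (A : 'M[R]_(p, m)) (B : 'M[R]_(q, m)) :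
  (A <= B)%MS -> \rank A = \rank B -> (A == B)%MS.
Proof. by move=> sAB rAB; have [_ <-] := mxrank_leqif_eq sAB; apply/eqP. Qed.

Lemma rowv_mul1 m (u : 'rV[R]_m) : dotv u u = 1 -> u *m u^T = 1%:M.
Proof.
move=> uu; apply/matrixP => i j; rewrite (ord1 i) (ord1 j) mulmxT_entry.
by rewrite !mxE /= !row_id uu.
Qed.

Lemma gram_schmidt r : forall p m (S : 'M[R]_(p, m)), \rank S = r ->
  exists U : 'M[R]_(r, m), U *m U^T = 1%:M /\ (U == S)%MS.
Proof.
elim: r => [|r IH] p m S rS.
  exists 0; split; first by apply/matrixP => [[]].
  move/eqP: rS; rewrite mxrank_eq0 => /eqP ->.
  by apply/andP; rewrite !sub0mx.
have [u [uS uu]] := exists_unit (ltac:(by rewrite rS) : (0 < \rank S)%N).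
have unz : u != 0 by rewrite -dotv_eq0 uu oner_eq0.
set K := kermx u^T.
set S' := (S :&: K)%MS.
have rK : \rank K = (m - 1)%N by rewrite mxrank_ker mxrank_tr rank_rV unz.
have nuS' : ~~ (u <= S')%MS.
  apply/negP; rewrite sub_capmx => /andP[_ /sub_kermxP].
  rewrite (rowv_mul1 uu) => /matrixP/(_ 0 0); rewrite !mxE eqxx /= => /eqP.
  by rewrite oner_eq0.
have lt : (\rank S' < \rank S)%N.
  have [le eq] := mxrank_leqif_sup (capmxSl S K).
  rewrite ltn_neqAle le andbT eq; apply: contra nuS' => sSS'.
  exact: submx_trans uS sSS'.
have ge : (r <= \rank S')%N.
  have := mxrank_sum_cap S K; rewrite -/S' rK rS.
  have := rank_leq_col (S + K)%MS.
  have := rank_leq_col S; rewrite rS.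
  lia.
have rS' : \rank S' = r by lia.
have [U' [UU' eU']] := IH _ _ S' rS'.
have U'K : (U' <= K)%MS by rewrite (eqmxP eU') capmxSr.
have U'u : U' *m u^T = 0 by apply/sub_kermxP.
have UU : col_mx u U' *m (col_mx u U')^T = (1%:M : 'M_(1 + r)).
  rewrite tr_col_mx mul_col_row rowv_mul1 // UU' U'u -(trmxK (u *m U'^T)).
  by rewrite trmx_mul trmxK U'u trmx0 -scalar_mx_block.
have eq : (col_mx u U' == S)%MS.
  apply: eqmx_of_rank; last by rewrite (orth_rank UU) rS add1n.
  rewrite col_mx_sub uS /=; apply: submx_trans (capmxSl S K).
  by rewrite (eqmxP eU').
by exists (col_mx u U'); split; [exact: UU | exact: eq].
Qed.

Definition symidem m (P : 'M[R]_m) := P^T = P /\ P *m P = P.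

Lemma proj_uniq m (P P' : 'M[R]_m) : symidem P -> symidem P' ->
  (P == P')%MS -> P = P'.
Proof.
move=> [PT PP] [P'T P'P] /andP[/submxP[D1 e1] /submxP[D2 e2]].
have h1 : P *m P' = P by rewrite {1}e1 -mulmxA P'P -e1.
have h2 : P' *m P = P' by rewrite {1}e2 -mulmxA PP -e2.
transitivity (P *m P')^T; first by rewrite h1 PT.
by rewrite trmx_mul PT P'T h2.
Qed.

Lemma symidem_orth r m (U : 'M[R]_(r, m)) : U *m U^T = 1%:M -> symidem (U^T *m U).
Proof.
move=> UU; split; first by rewrite trmx_mul trmxK.
by rewrite mulmxA -(mulmxA U^T) UU mulmx1.
Qed.

Lemma orth_proj_eq r m (U : 'M[R]_(r, m)) : U *m U^T = 1%:M -> (U^T *m U == U)%MS.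
Proof.
move=> UU; apply/andP; split; first exact: submxMl.
by rewrite -{1}(mul1mx U) -UU -mulmxA submxMl.
Qed.

Lemma proj_orth_basis r m (U : 'M[R]_(r, m)) (P : 'M[R]_m) :
  symidem P -> U *m U^T = 1%:M -> (U == P)%MS -> P = U^T *m U.
Proof.
move=> sP UU eUP; apply: proj_uniq => //; first exact: symidem_orth.
apply/eqmxP; apply: eqmx_trans (eqmx_sym (eqmxP eUP)) _.
exact: eqmx_sym (eqmxP (orth_proj_eq UU)).
Qed.

Lemma rank_trace m (P : 'M[R]_m) : symidem P -> (\rank P)%:R = \tr P.
Proof.
move=> sP; have [U [UU eU]] := gram_schmidt (erefl (\rank P)).
have -> : \tr P = \tr (U^T *m U) by rewrite -(proj_orth_basis sP UU eU).
by rewrite mxtrace_mulC UU mxtrace1.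
Qed.


Lemma zero_of_ineq (a c : R) : (forall s, s * a <= s ^+ 2 * c) -> a = 0.
Proof.
move=> H; set d := `|c| + 1.
have d0 : 0 < d by rewrite /d ltr_pwDr // normr_ge0.
have := H (a / d); set x := a / d.
have ax : a = x * d by rewrite /x divfK // gt_eqF.
rewrite ax => h.
have cc : c <= `|c| := ler_norm c.
have x2 : 0 <= x ^+ 2 := sqr_ge0 x.
have : x ^+ 2 <= 0.
  have e1 : x * (x * d) = x ^+ 2 * `|c| + x ^+ 2 by rewrite /d; ring.
  have : x ^+ 2 * c <= x ^+ 2 * `|c| by rewrite ler_wpM2l.
  lra.
move=> h2; have : x ^+ 2 = 0 by apply/eqP; rewrite eq_le h2 x2.
by move/eqP; rewrite sqrf_eq0 => /eqP ->; rewrite mul0r.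
Qed.

Lemma perturb m (x y z : 'rV[R]_m) :
  dotv y y = 1 -> dotv z z = 1 -> dotv y z = 0 ->
  (forall s : R, dotv x (((1 - s ^+ 2) / (1 + s ^+ 2)) *: y + ((2 * s) / (1 + s ^+ 2)) *: z) <= dotv x y) ->
  dotv x z = 0.
Proof.
move=> yy zz yz H; apply: (@zero_of_ineq _ (dotv x y)) => s.
have := H s; rewrite dotvDr !dotvZr.
have t0 : 0 < 1 + s ^+ 2 by rewrite ltr_pwDl // sqr_ge0.
set a := dotv x z; set c := dotv x y => h.
have e : (1 - s ^+ 2) / (1 + s ^+ 2) * c + 2 * s / (1 + s ^+ 2) * a =
   ((1 - s ^+ 2) * c + 2 * s * a) / (1 + s ^+ 2) by field; rewrite gt_eqF.
move: h; rewrite e ler_pdivrMr // => h.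
nra.
Qed.

Lemma unit_comb m (y z : 'rV[R]_m) (s : R) :
  dotv y y = 1 -> dotv z z = 1 -> dotv y z = 0 ->
  let v := ((1 - s ^+ 2) / (1 + s ^+ 2)) *: y + ((2 * s) / (1 + s ^+ 2)) *: z in
  dotv v v = 1.
Proof.
move=> yy zz yz v.
have t0 : 1 + s ^+ 2 != 0 by rewrite gt_eqF // ltr_pwDl // sqr_ge0.
rewrite /v !dotvDr !dotvDl !dotvZr !dotvZl yy zz yz (dotvC z y) yz.
by field.
Qed.

Section Principal.
Variables (p q m n : nat) (A : 'M[R]_(p, m)) (B : 'M[R]_(q, m)).
Variables (us vs : 'I_n -> 'rV[R]_m).
Hypothesis P : principal_seq A B us vs.

Lemma biorth1 (j k : 'I_n) : (j < k)%N -> dotv (us j) (vs k) = 0.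
Proof.
move=> jk.
have [[uA vB] uu vv orth mx] := P j.
have [[uA' vB'] uu' vv' orth' mx'] := P k.
have vjk : dotv (vs j) (vs k) = 0 by rewrite dotvC; case: (orth' j jk).
apply: (perturb (y := vs j)) => // s; apply: mx => //.
- by rewrite addmx_sub // scalemx_sub.
- exact: unit_comb.
- move=> i ij; split; first by case: (orth i ij).
  rewrite dotvDl !dotvZl; case: (orth i ij) => _ ->.
  by case: (orth' i (ltn_trans ij jk)) => _ ->; rewrite !mulr0 addr0.
Qed.

Lemma biorth2 (j k : 'I_n) : (j < k)%N -> dotv (us k) (vs j) = 0.
Proof.
move=> jk.
have [[uA vB] uu vv orth mx] := P j.
have [[uA' vB'] uu' vv' orth' mx'] := P k.
have ujk : dotv (us j) (us k) = 0 by rewrite dotvC; case: (orth' j jk).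
rewrite dotvC; apply: (perturb (y := us j)) => // s; rewrite dotvC (dotvC _ (us j)).
apply: mx => //.
- by rewrite addmx_sub // scalemx_sub.
- exact: unit_comb.
- move=> i ij; split; last by case: (orth i ij).
  rewrite dotvDl !dotvZl; case: (orth i ij) => -> _.
  by case: (orth' i (ltn_trans ij jk)) => -> _; rewrite !mulr0 addr0.
Qed.

Definition Umx := \matrix_(i < n) us i.
Definition Vmx := \matrix_(i < n) vs i.

Lemma Umx_orth : Umx *m Umx^T = 1%:M.
Proof.
apply/matrixP => i j; rewrite mulmxT_entry !rowK !mxE.
case: (ltngtP i j) => [ij|ji|/val_inj ->].
- have [_ _ _ o _] := P j; have [h _] := o i ij.
  by rewrite dotvC h -val_eqE /= (ltn_eqF ij).
- have [_ _ _ o _] := P i; have [h _] := o j ji.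
  by rewrite h -val_eqE /= (gtn_eqF ji).
- by have [_ -> _ _ _] := P j; rewrite eqxx.
Qed.

Lemma Vmx_orth : Vmx *m Vmx^T = 1%:M.
Proof.
apply/matrixP => i j; rewrite mulmxT_entry !rowK !mxE.
case: (ltngtP i j) => [ij|ji|/val_inj ->].
- have [_ _ _ o _] := P j; have [_ h] := o i ij.
  by rewrite dotvC h -val_eqE /= (ltn_eqF ij).
- have [_ _ _ o _] := P i; have [_ h] := o j ji.
  by rewrite h -val_eqE /= (gtn_eqF ji).
- by have [_ _ -> _ _] := P j; rewrite eqxx.
Qed.

Lemma UV_diag i j : i != j -> (Umx *m Vmx^T) i j = 0.
Proof.
rewrite mulmxT_entry !rowK => nij.
by case: (ltngtP i j) => [ij|ji|/val_inj eij]; [rewrite biorth1|rewrite biorth2|rewrite eij eqxx in nij].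
Qed.

Lemma principal_trace (PA PB : 'M[R]_m) : \rank A = n -> \rank B = n ->
  symidem PA -> symidem PB -> (PA == A)%MS -> (PB == B)%MS ->
  \tr (PA *m PB) = \sum_k (dotv (us k) (vs k)) ^+ 2.
Proof.
move=> rA rB sA sB eA eB.
have eU : (Umx == PA)%MS.
  apply/eqmxP; apply: eqmx_trans (eqmx_sym (eqmxP eA)).
  apply/eqmxP/eqmx_of_rank; last by rewrite orth_rank ?Umx_orth.
  by apply/row_subP => i; rewrite rowK; have [[]] := P i.
have eV : (Vmx == PB)%MS.
  apply/eqmxP; apply: eqmx_trans (eqmx_sym (eqmxP eB)).
  apply/eqmxP/eqmx_of_rank; last by rewrite orth_rank ?Vmx_orth.
  by apply/row_subP => i; rewrite rowK; have [[]] := P i.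
rewrite (proj_orth_basis sA Umx_orth eU) (proj_orth_basis sB Vmx_orth eV).
set G := Umx *m Vmx^T.
rewrite -mulmxA mxtrace_mulC.
have -> : Umx *m (Vmx^T *m Vmx) *m Umx^T = G *m G^T.
  by rewrite /G trmx_mul trmxK !mulmxA.
have Gii i : G i i = dotv (us i) (vs i) by rewrite /G mulmxT_entry !rowK.
rewrite /mxtrace; apply: eq_bigr => i _; rewrite mulmxT_entry dotvE (bigD1 i) //= big1 ?addr0.
  by rewrite [row i G 0 i]mxE Gii expr2.
by move=> j nji; rewrite [row i G 0 j]mxE /G UV_diag ?mul0r // eq_sym.
Qed.

End Principal.

End Basics.


Section Family.
Variable R : realType.

Lemma castmxT n1 n2 (e : n1 = n2) (X : 'M[R]_n1) :
  (castmx (e, e) X)^T = castmx (e, e) X^T.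
Proof. by case: n2 / e; rewrite !castmx_id. Qed.

Lemma castmxM n1 n2 (e : n1 = n2) (X Y : 'M[R]_n1) :
  castmx (e, e) X *m castmx (e, e) Y = castmx (e, e) (X *m Y).
Proof. by case: n2 / e; rewrite !castmx_id. Qed.

Lemma castmx_tr n1 n2 (e : n1 = n2) (X : 'M[R]_n1) : \tr (castmx (e, e) X) = \tr X.
Proof. by case: n2 / e; rewrite !castmx_id. Qed.

Lemma castmx_eqmx n1 n2 (e : n1 = n2) (X Y : 'M[R]_n1) :
  (X == Y)%MS -> (castmx (e, e) X == castmx (e, e) Y)%MS.
Proof. by case: n2 / e; rewrite !castmx_id. Qed.

Lemma castmx_symidem n1 n2 (e : n1 = n2) (X : 'M[R]_n1) :
  symidem X -> symidem (castmx (e, e) X).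
Proof. by case: n2 / e; rewrite !castmx_id. Qed.

Lemma cast2T k (X : 'M[R]_(2 ^ k + 2 ^ k)) : (cast2 X)^T = cast2 X^T.
Proof. exact: castmxT. Qed.
Lemma cast2M k (X Y : 'M[R]_(2 ^ k + 2 ^ k)) : cast2 X *m cast2 Y = cast2 (X *m Y).
Proof. exact: castmxM. Qed.
Lemma cast2_tr k (X : 'M[R]_(2 ^ k + 2 ^ k)) : \tr (cast2 X) = \tr X.
Proof. exact: castmx_tr. Qed.

Lemma kron_mulT n a b c d a' b' c' d' (Q Q' : 'M[R]_n) :
  kron22 a b c d Q *m (kron22 a' b' c' d' Q')^T =
  block_mx ((a * a' + b * b') *: (Q *m Q'^T)) ((a * c' + b * d') *: (Q *m Q'^T))
           ((c * a' + d * b') *: (Q *m Q'^T)) ((c * c' + d * d') *: (Q *m Q'^T)).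
Proof.
rewrite /kron22 tr_block_mx mulmx_block !linearZ /=.
by rewrite -!scalemxAl !scalerA !scalerDl !(mulrC a') !(mulrC b') !(mulrC c') !(mulrC d').
Qed.

Lemma kron_tr k a b c d a' b' c' d' (Q Q' : 'M[R]_(2 ^ k)) :
  \tr (cast2 (kron22 a b c d Q) *m (cast2 (kron22 a' b' c' d' Q'))^T) =
  (a * a' + b * b' + (c * c' + d * d')) * \tr (Q *m Q'^T).
Proof.
by rewrite cast2T cast2M cast2_tr kron_mulT mxtrace_block !mxtraceZ -mulrDl.
Qed.

Lemma castmx1 n1 n2 (e : n1 = n2) : castmx (e, e) (1%:M : 'M[R]_n1) = 1%:M.
Proof. by case: n2 / e; rewrite !castmx_id. Qed.

Lemma kron_orth k a b c d (Q : 'M[R]_(2 ^ k)) :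
  a * a + b * b = 1 -> a * c + b * d = 0 -> c * a + d * b = 0 -> c * c + d * d = 1 ->
  Q *m Q^T = 1%:M ->
  cast2 (kron22 a b c d Q) *m (cast2 (kron22 a b c d Q))^T = 1%:M.
Proof.
move=> h1 h2 h3 h4 QQ.
by rewrite cast2T cast2M kron_mulT QQ h1 h2 h3 h4 !scale1r !scale0r -scalar_mx_block /cast2 castmx1.
Qed.

Lemma Qs_orth j Q : Q \in Qs R j -> Q *m Q^T = 1%:M.
Proof.
elim: j Q => [|j IH] Q.
  by rewrite !inE => /orP[] /eqP ->; rewrite tr_scalar_mx -scalar_mxM ?mulrNN mulr1.
move=> /flatten_mapP[Q0 /IH QQ]; rewrite !inE => /or4P[] /eqP ->;
  apply: kron_orth => //; ring.
Qed.

Definition rQ j (Q Q' : 'M[R]_(2 ^ j)) :=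
  (\tr (Q *m Q'^T) == 0) || (\tr (Q *m Q'^T) == - (2 ^ j)%:R).

Lemma coefP (c t : R) j : (c == 0) || (c == 2) ->
  (t == 0) || (t == - (2 ^ j)%:R) -> (c * t == 0) || (c * t == - (2 ^ j.+1)%:R).
Proof.
case/orP => /eqP ->; first by rewrite mul0r eqxx.
case/orP => /eqP ->; first by rewrite mulr0 eqxx.
by rewrite expnS natrM mulrN eqxx orbT.
Qed.

Lemma coef0 (c t : R) (b : bool) : c = 0 -> (c * t == 0) || b.
Proof. by move->; rewrite mul0r eqxx. Qed.

Lemma allrel_flatten (T U : Type) (r : rel U) (xs : seq U) (f : T -> seq U) (s : seq T) :
  allrel r xs (flatten (map f s)) = all (fun y => allrel r xs (f y)) s.
Proof. by elim: s => [|y s IH] /=; [exact: allrel0r | rewrite allrel_catr IH]. Qed.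

Lemma pairwise_flatten_map (T U : Type) (r : rel U) (f : T -> seq U) (s : seq T) :
  (forall x, pairwise r (f x)) -> pairwise (fun x y => allrel r (f x) (f y)) s ->
  pairwise r (flatten (map f s)).
Proof.
move=> H; elim: s => //= x s IH /andP[a p].
by rewrite pairwise_cat allrel_flatten a H IH.
Qed.

Ltac coef := apply/orP; first [left; apply/eqP; ring | right; apply/eqP; ring].

Lemma Qs_pair j : pairwise (@rQ j) (Qs R j).
Proof.
elim: j => [|j IH].
  by rewrite /= /rQ andbT tr_scalar_mx -scalar_mxM mulrN1 mxtrace_scalar mulNrn eqxx orbT.
rewrite [Qs R j.+1]/=; apply: pairwise_flatten_map.
  move=> Q; rewrite /= !andbT.
  repeat (apply/andP; split); rewrite /rQ kron_tr; apply: coef0; ring.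
move: IH; apply: sub_pairwise => Q Q' rQQ.
apply/allrelP => u v; rewrite !inE => /or4P[] /eqP -> /or4P[] /eqP ->;
  rewrite /rQ kron_tr; apply: coefP rQQ; coef.
Qed.

Lemma Qs_size j : size (Qs R j) = (2 * 4 ^ j)%N.
Proof.
elim: j => // j IH; rewrite /= size_flatten /shape -map_comp.
rewrite (eq_map (_ : _ =1 fun _ => 4%N)) //.
rewrite sumnE big_map big_const_seq count_predT IH iter_addn addn0 expnS.
by rewrite mulnCA.
Qed.

Definition vv (a b : R) (i : 'I_2) : R := if i == 0 then a else b.
Definition lineP (a b : R) : 'M[R]_2 :=
  (a ^+ 2 + b ^+ 2)^-1 *: \matrix_(i < 2, j < 2) (vv a b i * vv a b j).

Lemma sum2 (F : 'I_2 -> R) : \sum_(l < 2) F l = F 0 + F 1.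
Proof.
rewrite !big_ord_recr big_ord0 /=.
have -> : (widen_ord (leqnSn 1) ord_max : 'I_2) = 0 by apply/val_inj.
have -> : (ord_max : 'I_2) = 1 by apply/val_inj.
by congr (_ + _); exact: add0r.
Qed.

Lemma ord2 (i : 'I_2) : i = 0 \/ i = 1.
Proof. by case: i => [[|[|//]]] Hi; [left|right]; apply/val_inj. Qed.

Lemma vv0 a b : vv a b 0 = a. Proof. by []. Qed.
Lemma vv1 a b : vv a b 1 = b. Proof. by []. Qed.

Lemma lineP_mul a b a' b' : lineP a b *m lineP a' b' =
  ((a ^+ 2 + b ^+ 2)^-1 * (a' ^+ 2 + b' ^+ 2)^-1 * (a * a' + b * b')) *:
     \matrix_(i < 2, j < 2) (vv a b i * vv a' b' j).
Proof.
apply/matrixP => i j; rewrite !mxE sum2 ?mxE.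
by rewrite !vv0 !vv1; ring.
Qed.

Lemma lineP_tr a b a' b' : \tr (lineP a b *m lineP a' b') =
  (a ^+ 2 + b ^+ 2)^-1 * (a' ^+ 2 + b' ^+ 2)^-1 * (a * a' + b * b') ^+ 2.
Proof. by rewrite lineP_mul mxtraceZ /mxtrace sum2 ?mxE !vv0 !vv1; ring. Qed.

Lemma line2E a b : line2 a b = \matrix_(i < 2, j < 2) (if i == 0 then vv a b j else 0).
Proof. by apply/matrixP => i j; rewrite !mxE. Qed.

Lemma lineP_good a b : a ^+ 2 + b ^+ 2 != 0 ->
  [/\ symidem (lineP a b), (lineP a b == line2 a b)%MS & \tr (lineP a b) = 1].
Proof.
move=> nz; split.
- split.
    by apply/matrixP => i j; rewrite !mxE (mulrC (vv a b j)).
  rewrite lineP_mul; congr (_ *: _).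
  by field.
- apply/andP; split.
    apply/submxP; exists (\matrix_(i < 2, j < 2) (if j == 0 then (a ^+ 2 + b ^+ 2)^-1 * vv a b i else 0)).
    apply/matrixP => i j; rewrite line2E !mxE sum2 ?mxE /=.
    by case: (ord2 j) => ->; rewrite ?vv0 ?vv1 /=; ring.
  apply/submxP; exists (\matrix_(i < 2, j < 2) (if i == 0 then vv a b j else 0)).
  apply/matrixP => i j; rewrite line2E !mxE sum2 ?mxE /=.
  case: (ord2 i) => -> /=; rewrite ?vv0 ?vv1 /=; last by ring.
  by field.
- rewrite mxtraceZ /mxtrace sum2 ?mxE !vv0 !vv1.
  by field.
Qed.

Lemma blockdiag_sub n (X1 Y1 X2 Y2 : 'M[R]_n) :
  (X1 <= Y1)%MS -> (X2 <= Y2)%MS -> (block_mx X1 0 0 X2 <= block_mx Y1 0 0 Y2)%MS.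
Proof.
move=> /submxP[D1 ->] /submxP[D2 ->]; apply/submxP; exists (block_mx D1 0 0 D2).
by rewrite mulmx_block !mul0mx !mulmx0 !addr0 !add0r.
Qed.

Lemma blockdiag_eqmx n (X1 Y1 X2 Y2 : 'M[R]_n) :
  (X1 == Y1)%MS -> (X2 == Y2)%MS -> (block_mx X1 0 0 X2 == block_mx Y1 0 0 Y2)%MS.
Proof.
move=> /andP[a b] /andP[c d]; apply/andP; split; exact: blockdiag_sub.
Qed.

Lemma blockdiag_symidem n (X Y : 'M[R]_n) :
  symidem X -> symidem Y -> symidem (block_mx X 0 0 Y).
Proof.
move=> [XT XX] [YT YY]; split.
  by rewrite tr_block_mx XT YT !trmx0.
by rewrite mulmx_block XX YY !mul0mx !mulmx0 !addr0 !add0r.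
Qed.

Lemma symidem1 n : symidem (1%:M : 'M[R]_n).
Proof. by split; rewrite ?trmx1 ?mulmx1. Qed.

Lemma symidem0 n : symidem (0 : 'M[R]_n).
Proof. by split; rewrite ?trmx0 ?mulmx0. Qed.

Lemma symidemC n (P : 'M[R]_n) : symidem P -> symidem (1%:M - P).
Proof.
move=> [PT PP]; split; first by rewrite linearB /= trmx1 PT.
by rewrite mulmxBl !mulmxBr ?mul1mx ?mulmx1 PP subrr subr0.
Qed.

Lemma perp_eqmx n (P X : 'M[R]_n) : symidem P -> (P == X)%MS ->
  (1%:M - P == perpmx X)%MS.
Proof.
move=> [PT PP] /andP[/submxP[D1 e1] /submxP[D2 e2]]; apply/andP; split.
  apply/sub_kermxP; rewrite e2 trmx_mul PT mulmxA mulmxBl mul1mx PP subrr.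
  by rewrite mul0mx.
set K := perpmx X.
have KX : K *m X^T = 0 by apply/sub_kermxP.
have KP : K *m P = 0 by rewrite -PT e1 trmx_mul mulmxA KX mul0mx.
have -> : K = K *m (1%:M - P) by rewrite mulmxBr mulmx1 KP subr0.
exact: submxMl.
Qed.

Definition good k (x : 'M[R]_(2 ^ k.+1) * 'M[R]_(2 ^ k.+1)) :=
  [/\ symidem x.2, (x.2 == x.1)%MS & \tr x.2 = (2 ^ k)%:R].

Fixpoint CsP (k : nat) : seq ('M[R]_(2 ^ k.+1) * 'M[R]_(2 ^ k.+1)) :=
  match k return seq ('M[R]_(2 ^ k.+1) * 'M[R]_(2 ^ k.+1)) with
  | 0 => [:: (line2 1 0, lineP 1 0); (line2 0 1, lineP 0 1);
             (line2 1 1, lineP 1 1); (line2 1 (-1), lineP 1 (-1))]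
  | k'.+1 =>
      [:: (cast2 (block_mx 1%:M 0 0 0), cast2 (block_mx 1%:M 0 0 0));
          (cast2 (block_mx 0 1%:M 0 0), cast2 (block_mx 0 0 0 1%:M))]
      ++ [seq (cast2 (block_mx x.1 0 0 x.1), cast2 (block_mx x.2 0 0 x.2)) | x <- CsP k']
      ++ [seq (cast2 (block_mx x.1 0 0 (perpmx x.1)), cast2 (block_mx x.2 0 0 (1%:M - x.2)))
             | x <- CsP k']
      ++ [seq (cast2 (block_mx 1%:M Q 0 0), cast2 (2^-1 *: block_mx 1%:M Q Q^T 1%:M))
             | Q <- Qs R k'.+1]
  end.

Lemma CsP_fst k : map fst (CsP k) = Cs R k.
Proof. by elim: k => // k IH; rewrite /= !map_cat -IH -!map_comp. Qed.

Lemma CsP_S k : CsP k.+1 =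
      [:: (cast2 (block_mx 1%:M 0 0 0), cast2 (block_mx 1%:M 0 0 0));
          (cast2 (block_mx 0 1%:M 0 0), cast2 (block_mx 0 0 0 1%:M))]
      ++ [seq (cast2 (block_mx x.1 0 0 x.1), cast2 (block_mx x.2 0 0 x.2)) | x <- CsP k]
      ++ [seq (cast2 (block_mx x.1 0 0 (perpmx x.1)), cast2 (block_mx x.2 0 0 (1%:M - x.2)))
             | x <- CsP k]
      ++ [seq (cast2 (block_mx 1%:M Q 0 0), cast2 (2^-1 *: block_mx 1%:M Q Q^T 1%:M))
             | Q <- Qs R k.+1].
Proof. by []. Qed.

Lemma natr_pow2S k : (2 ^ k.+1)%:R = (2 ^ k)%:R + (2 ^ k)%:R :> R.
Proof. by rewrite expnS mul2n -addnn natrD. Qed.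

Lemma trace1 n : \tr (1%:M : 'M[R]_n) = n%:R.
Proof. exact: mxtrace1. Qed.

Lemma Qs_orth' j Q : Q \in Qs R j -> Q^T *m Q = 1%:M.
Proof. by move/Qs_orth/mulmx1C. Qed.

Lemma half_twice m n (X : 'M[R]_(m, n)) : (2^-1 * 2^-1) *: (X + X) = 2^-1 *: X.
Proof. by rewrite -mulr2n -scaler_nat scalerA; congr (_ *: _); field. Qed.

Lemma CsP_good k x : x \in CsP k -> good x.
Proof.
elim: k x => [|k IH] x.
  rewrite !inE => /or4P[] /eqP -> {x}; rewrite /good /= expn0;
  (apply: lineP_good; rewrite gt_eqF //; nra).
rewrite CsP_S !mem_cat !inE -!orbA => /or4P[/eqP->|/eqP->|/mapP[y /IH [ys yq yt] ->]|/orP[/mapP[y /IH [ys yq yt] ->]|/mapP[Q /[dup] QQ /Qs_orth QQ1 ->]]].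
- split => /=.
  + by apply: castmx_symidem; apply: blockdiag_symidem; [exact: symidem1 | exact: symidem0].
  + by apply/andP; split; exact: submx_refl.
  + by rewrite cast2_tr mxtrace_block trace1 linear0 addr0.
- split => /=.
  + by apply: castmx_symidem; apply: blockdiag_symidem; [exact: symidem0 | exact: symidem1].
  + apply: castmx_eqmx; apply/andP; split; apply/submxP.
      by exists (block_mx 0 0 1%:M 0); rewrite mulmx_block !mul0mx !mulmx0 mul1mx !addr0.
    by exists (block_mx 0 1%:M 0 0); rewrite mulmx_block !mul0mx !mulmx0 mul1mx !addr0 !add0r.
  + by rewrite cast2_tr mxtrace_block trace1 linear0 add0r.
- split => /=.
  + by apply: castmx_symidem; apply: blockdiag_symidem.
  + by apply: castmx_eqmx; apply: blockdiag_eqmx.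
  + by rewrite cast2_tr mxtrace_block yt natr_pow2S.
- split => /=.
  + by apply: castmx_symidem; apply: blockdiag_symidem => //; apply: symidemC.
  + by apply: castmx_eqmx; apply: blockdiag_eqmx => //; apply: perp_eqmx.
  + by rewrite cast2_tr mxtrace_block linearB /= yt trace1 addrC subrK.
- have QQ2 := Qs_orth' QQ.
  split => /=.
  + apply: castmx_symidem; split.
      by rewrite linearZ /= tr_block_mx trmx1 trmxK.
    by rewrite -scalemxAl -scalemxAr scalerA mulmx_block !mul1mx !mulmx1 QQ1 QQ2 -add_block_mx half_twice.
  + apply: castmx_eqmx; apply/andP; split; apply/submxP.
      exists (2^-1 *: block_mx 1%:M 0 Q^T 0).
      by rewrite -scalemxAl mulmx_block ?mul1mx ?mulmx0 ?mul0mx ?mulmx1 ?addr0 ?QQ2.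
    exists (block_mx 1%:M Q 0 0).
    rewrite -scalemxAr mulmx_block ?mul1mx ?mulmx0 ?mul0mx ?mulmx1 ?addr0 ?QQ1.
    have -> : block_mx (1%:M + 1%:M) (Q + Q) 0 0 = block_mx 1%:M Q 0 0 + block_mx 1%:M Q 0 0 :> 'M[R]_(2 ^ k.+1 + 2 ^ k.+1).
      by rewrite add_block_mx !addr0.
    rewrite -mulr2n -scaler_nat scalerA mulVf ?scale1r //.
    by rewrite pnatr_eq0.
  + rewrite cast2_tr mxtraceZ mxtrace_block trace1.
    by field.
Qed.

Definition rC k (x y : 'M[R]_(2 ^ k.+1) * 'M[R]_(2 ^ k.+1)) :=
  (\tr (x.2 *m y.2) *+ 2 == (2 ^ k)%:R) || (\tr (x.2 *m y.2) == 0).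

Lemma T1 k (X1 X2 Y1 Y2 : 'M[R]_(2 ^ k)) :
  \tr (cast2 (block_mx X1 0 0 X2) *m cast2 (block_mx Y1 0 0 Y2)) =
  \tr (X1 *m Y1) + \tr (X2 *m Y2).
Proof.
by rewrite cast2M cast2_tr mulmx_block ?mulmx0 ?mul0mx ?addr0 ?add0r mxtrace_block.
Qed.

Lemma T2 k (X1 X2 Q : 'M[R]_(2 ^ k)) :
  \tr (cast2 (block_mx X1 0 0 X2) *m cast2 (2^-1 *: block_mx 1%:M Q Q^T 1%:M)) =
  2^-1 * (\tr X1 + \tr X2).
Proof.
by rewrite cast2M cast2_tr -scalemxAr mxtraceZ mulmx_block ?mulmx0 ?mul0mx ?addr0 ?add0r
  mxtrace_block ?mulmx1.
Qed.

Lemma T3 k (X1 X2 Q : 'M[R]_(2 ^ k)) :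
  \tr (cast2 (2^-1 *: block_mx 1%:M Q Q^T 1%:M) *m cast2 (block_mx X1 0 0 X2)) =
  2^-1 * (\tr X1 + \tr X2).
Proof. by rewrite mxtrace_mulC T2. Qed.

Lemma T4 k (Q Q' : 'M[R]_(2 ^ k)) :
  \tr (cast2 (2^-1 *: block_mx 1%:M Q Q^T 1%:M) *m cast2 (2^-1 *: block_mx 1%:M Q' Q'^T 1%:M)) =
  2^-1 * 2^-1 * (\tr (1%:M : 'M[R]_(2 ^ k)) *+ 2 + \tr (Q *m Q'^T) *+ 2).
Proof.
rewrite cast2M cast2_tr -scalemxAr -scalemxAl scalerA mxtraceZ mulmx_block mxtrace_block.
rewrite ?mul1mx ?mulmx1 !linearD /=.
have -> : \tr (Q^T *m Q') = \tr (Q *m Q'^T) by rewrite mxtrace_mulC -mxtrace_tr trmx_mul trmxK.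
by rewrite !mulr2n; ring.
Qed.

Ltac closeR := apply/orP; first
  [ solve [left; apply/eqP; rewrite ?mulr2n; field; done]
  | solve [right; apply/eqP; rewrite ?mulr2n; field; done] ].

Ltac closeL := apply/orP; first
  [ solve [left; apply/eqP; rewrite ?mulr2n; field; done]
  | solve [right; apply/eqP; rewrite ?mulr2n; field; done]
  | solve [left; apply/eqP; rewrite ?mulr2n; lra]
  | solve [right; apply/eqP; rewrite ?mulr2n; lra] ].

Ltac trs := rewrite ?T1 ?T2 ?T3 ?T4 ?mul1mx ?mulmx1 ?mul0mx ?mulmx0 ?mulmxBl ?mulmxBr
   ?mul1mx ?mulmx1 ?linear0 ?linearB ?linearD /= ?trace1 ?natr_pow2S.

Lemma CsP_pair k : pairwise (@rC k) (CsP k).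
Proof.
elim: k => [|k IH].
  rewrite /= /rC !lineP_tr expn0 !andbT.
  by repeat (apply/andP; split); closeR.
set N := (2 ^ k)%:R : R.
have gd y : y \in CsP k -> \tr y.2 = N by case/CsP_good.
rewrite CsP_S pairwise_cat pairwise2 !pairwise_cat.
apply/and3P; split; [| | apply/and3P; split; [| | apply/and3P; split]].
- apply/allrelP => u v; rewrite !inE => /orP[]/eqP->;
    rewrite !mem_cat => /or3P[] /mapP[y yin ->]; rewrite /rC /=; trs;
    rewrite ?(gd y yin) -/N; closeL.
- by rewrite /rC /=; trs; closeL.
- apply/allrelP => u v /mapP[x xin ->]; rewrite !mem_cat => /orP[] /mapP[y yin ->];
    rewrite /rC /=; trs; rewrite ?(gd x xin) ?(gd y yin) -/N; closeL.
- rewrite pairwise_map; apply: (sub_in_pairwise _ (allss _) IH) => x y xin yin.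
  rewrite /rC /=; trs; rewrite -/N => /orP[] /eqP h; move: h; clear -N => h; closeL.
- apply/allrelP => u v /mapP[x xin ->] /mapP[y yin ->].
  rewrite /rC /=; trs; rewrite ?(gd x xin) -/N; closeL.
- rewrite pairwise_map; apply: (sub_in_pairwise _ (allss _) IH) => x y xin yin.
  rewrite /rC /=; trs; rewrite ?(gd x xin) ?(gd y yin) -/N => /orP[] /eqP h; move: h; clear -N => h; closeL.
- rewrite pairwise_map; apply: (sub_pairwise _ (Qs_pair k.+1)) => Q Q'.
  rewrite /rC /rQ /=; trs; rewrite -/N => /orP[] /eqP h; rewrite h; clear; closeL.
Qed.
End Family.

From mathcomp Require Import classical_sets boolp topology normedtype matrix_normedtype derive.
Import numFieldNormedType.Exports.
Local Open Scope ring_scope.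


Section Cont.
Variable R : realType.
Variable N : nat.
Implicit Types f g : 'rV[R]_N -> R.

Lemma cont_cst (c : R) : continuous (fun _ : 'rV[R]_N => c).
Proof. by move=> x; exact: cst_continuous. Qed.

Lemma cont_coord (i : 'I_N) : continuous (fun z : 'rV[R]_N => z 0 i).
Proof. exact: coord_continuous. Qed.

Lemma cont_add f g : continuous f -> continuous g -> continuous (fun z => f z + g z).
Proof. by move=> cf cg x; exact: (continuousD (cf x) (cg x)). Qed.

Lemma cont_mul f g : continuous f -> continuous g -> continuous (fun z => f z * g z).
Proof. by move=> cf cg x; exact: (continuousM (cf x) (cg x)). Qed.

Lemma cont_sum (I : Type) (r : seq I) (P : pred I) (F : I -> 'rV[R]_N -> R) :
  (forall i, continuous (F i)) -> continuous (fun z => \sum_(i <- r | P i) F i z).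
Proof.
move=> cF; elim: r => [|i r IH].
  by under eq_fun do rewrite big_nil; exact: cont_cst.
under eq_fun do rewrite big_cons.
case: (P i); last exact: IH.
exact: cont_add.
Qed.

End Cont.

Section Exist.
Variable R : realType.

Lemma cont_sq N (f : 'rV[R]_N -> R) : continuous f -> continuous (fun z => f z ^+ 2).
Proof. by move=> cf; under eq_fun do rewrite expr2; exact: cont_mul. Qed.

Lemma cont_dotv N m (L M : 'rV[R]_N -> 'rV[R]_m) :
  (forall a, continuous (fun z => L z 0 a)) -> (forall a, continuous (fun z => M z 0 a)) ->
  continuous (fun z => dotv (L z) (M z)).
Proof.
move=> cL cM; under eq_fun do rewrite dotvE.
by apply: cont_sum => a; exact: cont_mul.
Qed.

Lemma cont_mulmx N m p (L : 'rV[R]_N -> 'rV[R]_m) (X : 'M[R]_(m, p)) c :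
  (forall a, continuous (fun z => L z 0 a)) -> continuous (fun z => (L z *m X) 0 c).
Proof.
move=> cL; under eq_fun do rewrite mxE.
by apply: cont_sum => a; apply: cont_mul => //; exact: cont_cst.
Qed.

Lemma cont_lsub m (a : 'I_m) : continuous (fun z : 'rV[R]_(m + m) => lsubmx z 0 a).
Proof. by under eq_fun do rewrite mxE; exact: cont_coord. Qed.

Lemma cont_rsub m (a : 'I_m) : continuous (fun z : 'rV[R]_(m + m) => rsubmx z 0 a).
Proof. by under eq_fun do rewrite mxE; exact: cont_coord. Qed.

Lemma sumsq_eq0 (I : finType) (P : pred I) (F : I -> R) :
  \sum_(i | P i) F i ^+ 2 = 0 <-> (forall i, P i -> F i = 0).
Proof.
split.
  move/eqP; rewrite psumr_eq0 => [/allP H i Pi|i _]; last exact: sqr_ge0.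
  by have := H i (mem_index_enum _); rewrite Pi /= sqrf_eq0 => /eqP.
by move=> H; rewrite big1 // => i Pi; rewrite H // expr0n.
Qed.

Lemma sumsq_ge0 (I : finType) (P : pred I) (F : I -> R) : 0 <= \sum_(i | P i) F i ^+ 2.
Proof. by apply: sumr_ge0 => i _; exact: sqr_ge0. Qed.

Lemma add0_split (a b : R) : a + b = 0 -> 0 <= b -> 0 <= a -> a = 0 /\ b = 0.
Proof. by move=> ab b0 a0; split; lra. Qed.

Lemma rowv0 m (u : 'rV[R]_m) : (forall c, u 0 c = 0) -> u = 0.
Proof. by move=> H; apply/rowP => c; rewrite H mxE. Qed.

Lemma coord_bound m (u : 'rV[R]_m) a : dotv u u = 1 -> -1 <= u 0 a <= 1.
Proof.
rewrite dotvE (bigD1 a) //= => h.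
have : 0 <= \sum_(i | i != a) u 0 i * u 0 i.
  by apply: sumr_ge0 => i _; rewrite -expr2 sqr_ge0.
move=> h2; apply/andP; split; nra.
Qed.

Definition pcond p q m n (A : 'M[R]_(p, m)) (B : 'M[R]_(q, m))
    (us vs : 'I_n -> 'rV[R]_m) (k : 'I_n) : Prop :=
    [/\ (us k <= A)%MS /\ (vs k <= B)%MS,
        dotv (us k) (us k) = 1, dotv (vs k) (vs k) = 1,
        (forall j : 'I_n, (j < k)%N ->
            dotv (us k) (us j) = 0 /\ dotv (vs k) (vs j) = 0) &
        (forall u v : 'rV[R]_m, (u <= A)%MS -> (v <= B)%MS ->
            dotv u u = 1 -> dotv v v = 1 ->
            (forall j : 'I_n, (j < k)%N -> dotv u (us j) = 0 /\ dotv v (vs j) = 0) ->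
            dotv u v <= dotv (us k) (vs k))].

Lemma pcond_ext p q m n (A : 'M[R]_(p, m)) (B : 'M[R]_(q, m))
    (us vs us' vs' : 'I_n -> 'rV[R]_m) (k : 'I_n) :
  (forall i : 'I_n, (i <= k)%N -> us' i = us i /\ vs' i = vs i) ->
  pcond A B us vs k -> pcond A B us' vs' k.
Proof.
move=> H [[a b] c d o mx]; have [e1 e2] := H k (leqnn k).
rewrite /pcond e1 e2; split => //.
  by move=> i ik; have [-> ->] := H i (ltnW ik); exact: o.
move=> u v uA vB uu vv ou; apply: mx => // i ik.
by have [<- <-] := H i (ltnW ik); exact: ou.
Qed.

Lemma unit_perp p m n (A : 'M[R]_(p, m)) (us : 'I_n -> 'rV[R]_m) j :
  (j < n)%N -> (n <= \rank A)%N ->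
  exists u, [/\ (u <= A)%MS, dotv u u = 1 &
                forall i : 'I_n, (i < j)%N -> dotv u (us i) = 0].
Proof.
move=> jn rA.
pose X : 'M[R]_(j, m) := \matrix_(i < j) us (widen_ord (ltnW jn) i).
set K := kermx X^T.
have rK : \rank K = (m - \rank X)%N by rewrite mxrank_ker mxrank_tr.
have rX : (\rank X <= j)%N := rank_leq_row X.
have := mxrank_sum_cap A K; have := rank_leq_col (A + K)%MS.
have := rank_leq_col A; rewrite rK => h1 h2 h3.
have pos : (0 < \rank (A :&: K))%N by lia.
have [u [uS uu]] := exists_unit pos.
exists u; split => //; first exact: submx_trans uS (capmxSl _ _).
move=> i ij.
have uK : (u <= K)%MS := submx_trans uS (capmxSr _ _).
move/sub_kermxP: uK => /matrixP/(_ 0 (Ordinal ij)).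
rewrite mulmxT_entry rowK mxE.
have -> : widen_ord (ltnW jn) (Ordinal ij) = i by apply/val_inj.
by rewrite /= row_id.
Qed.

Section Step.
Variables (p q m n : nat) (A : 'M[R]_(p, m)) (B : 'M[R]_(q, m)).
Hypotheses (rA : (n <= \rank A)%N) (rB : (n <= \rank B)%N).

Definition feas j (us vs : 'I_n -> 'rV[R]_m) (u v : 'rV[R]_m) :=
  [/\ (u <= A)%MS, (v <= B)%MS, dotv u u = 1, dotv v v = 1 &
      forall i : 'I_n, (i < j)%N -> dotv u (us i) = 0 /\ dotv v (vs i) = 0].

Lemma exists_max j us vs : (j < n)%N ->
  exists u v, feas j us vs u v /\
     forall u' v', feas j us vs u' v' -> dotv u' v' <= dotv u v.
Proof.
move=> jn.
pose H (z : 'rV[R]_(m + m)) :=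
  (dotv (lsubmx z) (lsubmx z) - 1) ^+ 2 + (dotv (rsubmx z) (rsubmx z) - 1) ^+ 2
  + \sum_c ((lsubmx z *m cokermx A) 0 c) ^+ 2 + \sum_c ((rsubmx z *m cokermx B) 0 c) ^+ 2
  + \sum_(i : 'I_n | (i < j)%N) (dotv (lsubmx z) (us i)) ^+ 2
  + \sum_(i : 'I_n | (i < j)%N) (dotv (rsubmx z) (vs i)) ^+ 2.
have Hiff z : H z = 0 <-> feas j us vs (lsubmx z) (rsubmx z).
  split.
    rewrite /H => h.
    have [h' h6] := add0_split h (sumsq_ge0 _ _) (ltac:(by rewrite !addr_ge0 ?sqr_ge0 ?sumsq_ge0)).
    clear h; have [h h5] := add0_split h' (sumsq_ge0 _ _) (ltac:(by rewrite !addr_ge0 ?sqr_ge0 ?sumsq_ge0)).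
    clear h'; have [h' h4] := add0_split h (sumsq_ge0 _ _) (ltac:(by rewrite !addr_ge0 ?sqr_ge0 ?sumsq_ge0)).
    clear h; have [h h3] := add0_split h' (sumsq_ge0 _ _) (ltac:(by rewrite !addr_ge0 ?sqr_ge0 ?sumsq_ge0)).
        have [h1 h2] := add0_split h (sqr_ge0 _) (sqr_ge0 _).
    move/sumsq_eq0: h3 => h3; move/sumsq_eq0: h4 => h4.
    move/sumsq_eq0: h5 => h5; move/sumsq_eq0: h6 => h6.
    move/eqP: h1; rewrite sqrf_eq0 subr_eq0 => /eqP h1.
    move/eqP: h2; rewrite sqrf_eq0 subr_eq0 => /eqP h2.
    split => //.
    - by rewrite submxE; apply/eqP/rowv0 => c; exact: h3.
    - by rewrite submxE; apply/eqP/rowv0 => c; exact: h4.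
    - by move=> i ij; split; [exact: h5 | exact: h6].
  { case=> lA rB' ll rr o; rewrite /H ll rr !subrr expr0n /= !addr0.
  move: lA rB'; rewrite !submxE => /eqP lA /eqP rB'.
  rewrite lA rB' !(proj2 (sumsq_eq0 _ _)) ?addr0 //.
  all: try (by move=> c _; rewrite mxE).
  all: by move=> i ij; case: (o i ij). }
have cH : continuous H.
  rewrite /H; repeat apply: cont_add.
  - by apply: cont_sq; apply: cont_add; [apply: cont_dotv; exact: cont_lsub | exact: cont_cst].
  - by apply: cont_sq; apply: cont_add; [apply: cont_dotv; exact: cont_rsub | exact: cont_cst].
  - by apply: cont_sum => c; apply: cont_sq; apply: cont_mulmx; exact: cont_lsub.
  - by apply: cont_sum => c; apply: cont_sq; apply: cont_mulmx; exact: cont_rsub.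
  - by apply: cont_sum => c; apply: cont_sq; apply: cont_dotv; [exact: cont_lsub | move=> a; exact: cont_cst].
  - by apply: cont_sum => c; apply: cont_sq; apply: cont_dotv; [exact: cont_rsub | move=> a; exact: cont_cst].
pose S := (H @^-1` [set x | x = 0])%classic.
have Sclosed : closed S.
  by apply: preimage_closed; [move=> z _; exact: cH | exact: closed_eq].
have Scompact : compact S.
  pose Box := [set v : 'rV[R]_(m + m) | forall i, (`[(-1 : R), 1]%classic) (v ord0 i)]%classic.
  have cBox : compact Box.
    apply: (@rV_compact _ _ (fun=> `[(-1 : R), 1]%classic)).
    by move=> _; apply: segment_compact.
  apply: subclosed_compact Sclosed cBox _ => z /Hiff [_ _ ll rr _] i.
  rewrite /= in_itv /=.
  case: (splitP i) => a ea.
    have -> : i = lshift m a by apply/val_inj.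
    by have := coord_bound a ll; rewrite mxE.
  have -> : i = rshift m a by apply/val_inj.
  by have := coord_bound a rr; rewrite mxE.
have [u [uA uu uo]] := unit_perp us jn rA.
have [v [vB vv vo]] := unit_perp vs jn rB.
have S0 : (S !=set0)%classic.
  exists (row_mx u v); apply/Hiff; rewrite row_mxKl row_mxKr; split => //.
  by move=> i ij; rewrite uo // vo.
pose f (z : 'rV[R]_(m + m)) := dotv (lsubmx z) (rsubmx z).
have cf : continuous f by apply: cont_dotv; [exact: cont_lsub | exact: cont_rsub].
have [c /set_mem cS cmax] := EVT_max_rV S0 Scompact (continuous_subspaceT cf).
exists (lsubmx c), (rsubmx c); split; first exact/Hiff.
move=> u' v' fe; have := cmax (row_mx u' v').
rewrite /f row_mxKl row_mxKr; apply; apply: mem_set; apply/Hiff.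
by rewrite row_mxKl row_mxKr.
Qed.

Lemma principal_exists : exists us vs : 'I_n -> 'rV[R]_m, principal_seq A B us vs.
Proof.
suff : forall j, (j <= n)%N -> exists us vs : 'I_n -> 'rV[R]_m,
    forall k : 'I_n, (k < j)%N -> pcond A B us vs k.
  by move=> /(_ n (leqnn n)) [us [vs H]]; exists us, vs => k; exact: H.
elim=> [_|j IH jn].
  by exists (fun _ => 0), (fun _ => 0) => k.
have [us [vs H]] := IH (ltnW jn).
have [u [v [[uA vB uu vv o] mx]]] := exists_max us vs jn.
pose us' (i : 'I_n) := if (i == j :> nat) then u else us i.
pose vs' (i : 'I_n) := if (i == j :> nat) then v else vs i.
exists us', vs' => k; rewrite ltnS leq_eqVlt => /orP[/eqP kj|kj].
  have e (i : 'I_n) : (i < j)%N -> us' i = us i /\ vs' i = vs i.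
    by move=> ij; rewrite /us' /vs' (ltn_eqF ij).
  have ek : us' k = u /\ vs' k = v by rewrite /us' /vs' kj eqxx.
  rewrite /pcond !(proj1 ek) !(proj2 ek); split => //.
    by move=> i ik; have [-> ->] := e i (ltac:(by rewrite -kj)); apply: o; rewrite -kj.
  move=> u1 v1 u1A v1B u1u v1v o1; apply: mx; split => // i ij.
  by have [<- <-] := e i ij; apply: o1; rewrite kj.
apply: pcond_ext (H k kj) => i ik.
by rewrite /us' /vs' (ltn_eqF (leq_ltn_trans ik kj)).
Qed.

End Step.
End Exist.


Lemma pairwise_mem (T : eqType) (r : rel T) (s : seq T) x y :
  pairwise r s -> x \in s -> y \in s -> [\/ x = y, r x y | r y x].
Proof.
elim: s => // z s IH /= /andP[/allP rz ps].
rewrite !inE => /orP[/eqP->|xs] /orP[/eqP->|ys].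
- by constructor 1.
- by constructor 2; exact: rz.
- by constructor 3; exact: rz.
- exact: IH.
Qed.

Lemma Cs_size (R : realType) k :
  size (Cs R k) = ((2 ^ k.+1 - 1) * (2 ^ k.+1 + 2))%N.
Proof.
elim: k => // k IH.
rewrite /= !size_cat !size_map Qs_size IH.
have e4 : (4 ^ k.+1 = 2 ^ k.+1 * 2 ^ k.+1)%N by rewrite -expnMn.
rewrite e4 [(2 ^ k.+2)%N]expnS.
have : (1 <= 2 ^ k.+1)%N by rewrite expn_gt0.
set x := (2 ^ k.+1)%N; nia.
Qed.

Section Main.
Variable R : realType.
Variable k : nat.

Lemma good_rank (x : 'M[R]_(2 ^ k.+1) * 'M[R]_(2 ^ k.+1)) :
  x \in CsP R k -> \rank x.1 = (2 ^ k)%N.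
Proof.
case/CsP_good => s e t.
rewrite -(eqmx_rank e); apply/eqP; rewrite -(eqr_nat R) rank_trace // t.
by [].
Qed.

Lemma good_trsq (x : 'M[R]_(2 ^ k.+1) * 'M[R]_(2 ^ k.+1)) :
  x \in CsP R k -> \tr (x.2 *m x.2) = (2 ^ k)%:R.
Proof. by case/CsP_good => [[_ ->] _ ->]. Qed.

Lemma rC_neq (x y : 'M[R]_(2 ^ k.+1) * 'M[R]_(2 ^ k.+1)) :
  x \in CsP R k -> y \in CsP R k -> rC x y -> ~~ (x.1 == y.1)%MS.
Proof.
move=> xin yin r; apply/negP => e.
have [sx ex tx] := CsP_good xin; have [sy ey ty] := CsP_good yin.
have e2 : (x.2 == y.2)%MS.
  apply/eqmxP; apply: eqmx_trans (eqmxP ex) _.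
  apply: eqmx_trans (eqmxP e) _; exact: eqmx_sym (eqmxP ey).
have xy := proj_uniq sx sy e2.
move: r; rewrite /rC -xy (good_trsq xin).
have N0 : (0 : R) < (2 ^ k)%:R by rewrite ltr0n expn_gt0.
case/orP => /eqP; rewrite ?mulr2n => h; move: h N0; clear; move=> h N0; lra.
Qed.

End Main.

Theorem mainTheorem1 (R : realType) (k : nat) :
  let m := (2 ^ k.+1)%N in
  [/\ size (undup [seq <<A>>%MS | A <- Cs R k]) = ((m - 1) * (m + 2))%N,
      (forall A, A \in Cs R k -> \rank A = (2 ^ k)%N) &
      (forall A B, A \in Cs R k -> B \in Cs R k -> ~~ (A == B)%MS ->
         (exists us vs : 'I_(2 ^ k) -> 'rV[R]_m, principal_seq A B us vs) /\
         (forall us vs : 'I_(2 ^ k) -> 'rV[R]_m, principal_seq A B us vs ->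
            dist_of us vs = Num.sqrt (m%:R / 4) \/
            dist_of us vs = Num.sqrt (m%:R / 2)))].
Proof.
move=> m.
have memC A : A \in Cs R k -> exists2 x, x \in CsP R k & x.1 = A.
  by rewrite -CsP_fst => /mapP[x xin ->]; exists x.
split.
- rewrite undup_id; first by rewrite size_map Cs_size.
  rewrite -CsP_fst -map_comp uniq_pairwise pairwise_map.
  apply: (sub_in_pairwise _ (allss _) (CsP_pair R k)) => x y xin yin r /=.
  by apply: contra (rC_neq xin yin r) => /eqP/genmxP.
- by move=> A /memC[x xin <-]; exact: good_rank.
move=> A B /memC[x xin <-] /memC[y yin <-] nxy.
have [rA rB] := (good_rank xin, good_rank yin).
split; first by apply: principal_exists; rewrite ?rA ?rB.
move=> us vs P.
have [sx ex tx] := CsP_good xin; have [sy ey ty] := CsP_good yin.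
have T := principal_trace P rA rB sx sy ex ey.
have Hr : rC x y.
  have [exy|//|ryx] := pairwise_mem (CsP_pair R k) xin yin.
    by rewrite exy in nxy; rewrite submx_refl in nxy.
  by rewrite /rC mxtrace_mulC.
have D : dist_of us vs = Num.sqrt ((2 ^ k)%:R - \tr (x.2 *m y.2)).
  rewrite /dist_of T sumrB sumr_const card_ord.
  by [].
rewrite D /m natr_pow2S.
move: Hr; rewrite /rC => /orP[] /eqP h; [left|right]; congr Num.sqrt;
  move: h; set t := \tr _; set N := (2 ^ k)%:R; clear; move=> h; rewrite ?mulr2n in h; lra.
Qed.
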